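(* Let $n$ be a nonnegative integer. Suppose there exist a nonnegative integer $B$ and integers $x,y,z$ such that $3\mid n+B$ and $$\frac23(n+B)+B-5B^2=x^2+y^2+z^2+\frac{(x+y+z)^2}{2}\le B^2.$$ Then there exist nonnegative integers $x_0,y_0,z_0,w_0$ with $n=p_5(x_0)+p_5(y_0)+p_5(z_0)+2p_5(w_0)$.
   Context: For $k\in\mathbb{Z}$, $p_5(k)=k(3k-1)/2$. *)

(* Defs.v *)
From Stdlib Require Import ZArith QArith.
Open Scope Z_scope.
Definition p5 (k : Z) : Z := k * (3 * k - 1) / 2.

(* Main.v *)
Require Import Defs.
From Stdlib Require Import ZArith QArith Lia.

Lemma p5_2 (k : Z) : (2 * p5 k = k * (3 * k - 1))%Z.
Proof.
  unfold p5.
  destruct (Z_modulo_2 k) as [[m Hm]|[m Hm]].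
  - assert (E : (k * (3 * k - 1) = (m * (6 * m - 1)) * 2)%Z) by (subst; ring).
    rewrite E, Z.div_mul by lia. ring.
  - assert (E : (k * (3 * k - 1) = ((2*m+1) * (3 * m + 1)) * 2)%Z) by (subst; ring).
    rewrite E, Z.div_mul by lia. ring.
Qed.

Theorem lemma2p2 (n : Z) (Hn : (0 <= n)%Z) :
  (exists (B x y z : Z), (0 <= B)%Z /\ (3 | n + B)%Z /\
     ((2 # 3) * inject_Z (n + B) + inject_Z B - 5 * inject_Z B ^ 2
        == inject_Z x ^ 2 + inject_Z y ^ 2 + inject_Z z ^ 2
           + inject_Z (x + y + z) ^ 2 / 2)%Q /\
     (inject_Z x ^ 2 + inject_Z y ^ 2 + inject_Z z ^ 2
        + inject_Z (x + y + z) ^ 2 / 2 <= inject_Z B ^ 2)%Q) ->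
  exists (x0 y0 z0 w0 : Z), (0 <= x0)%Z /\ (0 <= y0)%Z /\ (0 <= z0)%Z /\ (0 <= w0)%Z /\
    n = (p5 x0 + p5 y0 + p5 z0 + 2 * p5 w0)%Z.
Proof.
  intros [B [x [y [z [HB [_ [H1 H2]]]]]]].
  unfold Qeq, Qle in *.
  cbn [Qnum Qden Qmult Qplus Qminus Qopp Qpower Qpower_positive pow_pos inject_Z Qdiv Qinv] in *.
  rewrite ?Pos.mul_1_l, ?Pos.mul_1_r in *.
  cbn [Pos.mul] in *.
  destruct (Z_modulo_2 (x + y + z)) as [[t Ht]|[t Ht]].
  2:{ exfalso. rewrite Ht in H1.
      assert (E : (2 * (2 * (n + B) * 3 + B * 3 * 3 - 5 * (B * B) * 3 * 3
                   - 3 * ((x*x + y*y + z*z) * 2)) = 3 * 3 * (4*t*t + 4*t + 1) * 2)%Z) by nia.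
      lia. }
  rewrite Ht in H1, H2.
  exists (B + x)%Z, (B + y)%Z, (B + z)%Z, (B - t)%Z.
  assert (Hx : (x * x <= B * B)%Z) by nia.
  assert (Hy : (y * y <= B * B)%Z) by nia.
  assert (Hz : (z * z <= B * B)%Z) by nia.
  assert (Ht2 : (t * t <= B * B)%Z) by nia.
  repeat split; try nia.
  pose proof (p5_2 (B + x)). pose proof (p5_2 (B + y)).
  pose proof (p5_2 (B + z)). pose proof (p5_2 (B - t)).
  nia.
Qed.
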